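(* Let ${\bf L}\in\mathbb{S}^d_{+}$ and let ${\bf S}$ be a random matrix with values in $\mathbb{S}^d_+$ and $\mathbb{E}[{\bf S}]={\bf I}_d$ (with finite second moments). Then the optimization problem $$\text{minimize } \log\det({\bf D}^{-1})\quad\text{subject to}\quad \mathbb{E}[{\bf S}{\bf D}{\bf L}{\bf D}{\bf S}]\preceq{\bf D},\quad {\bf D}\in\mathbb{S}^d_{++}$$ is a convex optimization problem with a convex constraint; in particular the set $\{{\bf D}\in\mathbb{S}^d_{++}:\mathbb{E}[{\bf S}{\bf D}{\bf L}{\bf D}{\bf S}]\preceq{\bf D}\}$ is convex.
   Context: $\mathbb{S}^d_{+}$ (resp. $\mathbb{S}^d_{++}$) denotes the set of $d\times d$ symmetric positive semidefinite (resp. positive definite) matrices; $\preceq$ is the Loewner order. *)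

(* Defs.v *)
From HB Require Import structures.
From mathcomp Require Import all_boot all_order all_algebra.
From mathcomp Require Import all_classical all_reals all_analysis.
Set Implicit Arguments. Unset Strict Implicit. Unset Printing Implicit Defensive.
Import Order.TTheory GRing.Theory Num.Theory.
Local Open Scope ring_scope.

Definition psd (R : realType) (d : nat) (A : 'M[R]_d) : Prop :=
  A^T = A /\ forall x : 'cV[R]_d, 0 <= (x^T *m A *m x) 0 0.

Definition pd (R : realType) (d : nat) (A : 'M[R]_d) : Prop :=
  A^T = A /\ forall x : 'cV[R]_d, x != 0 -> 0 < (x^T *m A *m x) 0 0.

Definition loewner_le (R : realType) (d : nat) (A B : 'M[R]_d) : Prop :=
  psd (B - A).

Definition mexpect (dT : measure_display) (T : measurableType dT)
  (R : realType) (P : probability T R) (d : nat) (M : T -> 'M[R]_d) : 'M[R]_d :=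
  \matrix_(i, j) fine ('E_P[fun w => M w i j])%E.

Definition feasible (dT : measure_display) (T : measurableType dT)
  (R : realType) (P : probability T R) (d : nat) (S : T -> 'M[R]_d)
  (L : 'M[R]_d) (D : 'M[R]_d) : Prop :=
  pd D /\ loewner_le (mexpect P (fun w => S w *m D *m L *m D *m S w)) D.

Definition objective (R : realType) (d : nat) (D : 'M[R]_d) : R :=
  ln (\det (invmx D)).

(* Main.v *)
Require Import Defs.
From HB Require Import structures.
From mathcomp Require Import all_boot all_order all_algebra.
From mathcomp Require Import all_classical all_reals all_analysis.
From mathcomp Require Import ring lra.
Import Order.TTheory GRing.Theory Num.Theory.
Local Open Scope ring_scope.
Set Implicit Arguments. Unset Strict Implicit. Unset Printing Implicit Defensive.
Definition qf (R : realType) n (x : 'cV[R]_n) (M : 'M[R]_n) : R := (x^T *m M *m x) 0 0.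

Lemma qfE (R : realType) n (x : 'cV[R]_n) (M : 'M[R]_n) :
  qf x M = \sum_i \sum_j x i 0 * M i j * x j 0.
Proof.
rewrite /qf mxE exchange_big /=; apply: eq_bigr => j _.
rewrite mxE mulr_suml; apply: eq_bigr => i _.
by rewrite !mxE.
Qed.

Definition schur (R : realType) n (C : 'M[R]_n.+1) : 'M[R]_n :=
  \matrix_(i, j) (C (lift ord0 i) (lift ord0 j)
     - C (lift ord0 i) ord0 * C ord0 (lift ord0 j) / C ord0 ord0).
Definition ext (R : realType) n (s : R) (y : 'cV[R]_n) : 'cV[R]_n.+1 :=
  \col_i (if unlift ord0 i is Some j then y j 0 else s).
Definition rr (R : realType) n (C : 'M[R]_n.+1) (y : 'cV[R]_n) : R :=
  \sum_j C ord0 (lift ord0 j) * y j 0.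

Lemma ext0 (R : realType) n (s : R) (y : 'cV[R]_n) : ext s y ord0 0 = s.
Proof. by rewrite mxE unlift_none. Qed.
Lemma extS (R : realType) n (s : R) (y : 'cV[R]_n) j : ext s y (lift ord0 j) 0 = y j 0.
Proof. by rewrite mxE liftK. Qed.

Lemma qf_ext (R : realType) n (C : 'M[R]_n.+1) s y : C^T = C -> C ord0 ord0 != 0 ->
  qf (ext s y) C = C ord0 ord0 * (s + rr C y / C ord0 ord0) ^+ 2 + qf y (schur C).
Proof.
move=> sC c0.
have sym i j : C i j = C j i by rewrite -{1}sC mxE.
rewrite !qfE big_ord_recl (big_ord_recl n) ext0 /=.
under [X in _ + X = _]eq_bigr => i _ do rewrite (big_ord_recl n) !extS ext0.
under [X in _ + X = _]eq_bigr => i _ do under eq_bigr => j _ do rewrite !extS.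
under [X in _ = _ + X]eq_bigr => i _ do under eq_bigr => j _ do rewrite mxE.
rewrite big_split /=.
under eq_bigr => i _ do rewrite extS.
set c := C ord0 ord0.
have -> : \sum_(i < n) s * C ord0 (lift ord0 i) * y i 0 = s * rr C y.
  by rewrite /rr mulr_sumr; apply: eq_bigr => i _; rewrite mulrA.
have -> : \sum_(i < n) y i 0 * C (lift ord0 i) ord0 * s = rr C y * s.
  rewrite /rr mulr_suml; apply: eq_bigr => i _; rewrite sym; ring.
have -> : \sum_(i < n) \sum_(j < n) y i 0 * (C (lift ord0 i) (lift ord0 j) -
      C (lift ord0 i) ord0 * C ord0 (lift ord0 j) / c) * y j 0 =
  \sum_(i < n) \sum_(j < n) y i 0 * C (lift ord0 i) (lift ord0 j) * y j 0
   - rr C y * rr C y / c.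
  rewrite /rr -mulrA [X in _ - X]mulr_suml -sumrB; apply: eq_bigr => i _.
  rewrite [X in _ * X]mulr_suml [X in _ - X]mulr_sumr -sumrB; apply: eq_bigr => j _.
  rewrite (sym (lift ord0 i) ord0); ring.
rewrite -/c.
set Q := \sum_(i < n) \sum_(j < n) _.
rewrite /= (_ : rr C y * rr C y / c = c * (rr C y / c) ^+ 2); last first.
  by field.
set r := rr C y.
by field.
Qed.

Lemma det_schur (R : realType) n (C : 'M[R]_n.+1) : C ord0 ord0 != 0 ->
  \det C = C ord0 ord0 * \det (schur C).
Proof.
move=> c0; set c := C ord0 ord0.
pose C' : 'M[R]_n.+1 := \matrix_(i, j)
  (if i == ord0 then C i j else C i j - C i ord0 * C ord0 j / c).
pose E : 'M[R]_n.+1 := \matrix_(i, j)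
  ((i == j)%:R + (if (i != ord0) && (j == ord0) then C i ord0 / c else 0)).
have eC : C = E *m C'.
  apply/matrixP => i j; rewrite !mxE (big_ord_recl n) !mxE /=.
  case: (unliftP ord0 i) => [i'|] ->; last first.
    rewrite eqxx /= big1 ?addr0 ?mul1r // => k _.
    by rewrite /E /C' !mxE /= addr0 mul0r.
  rewrite (bigD1 i') //= big1 ?addr0; last first.
    move=> k nk; rewrite /E /C' !mxE /= (inj_eq lift_inj) eq_sym (negbTE nk) /=.
    by rewrite addr0 mul0r.
  rewrite /E /C' !mxE /= eqxx.
  set u := C (lift ord0 i') ord0; rewrite /= -/c.
  by field.
have dE : \det E = 1.
  rewrite det_trig; last first.
    apply/is_trig_mxP => i j lij; rewrite /E !mxE.
    rewrite (_ : (i == j) = false); last by apply/negbTE; rewrite neq_ltn lij.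
    rewrite (_ : (j == ord0) = false) ?andbF ?addr0 //.
    by apply/negbTE; rewrite -(inj_eq val_inj) /= -lt0n (leq_ltn_trans _ lij).
  by apply: big1 => i _; rewrite /E !mxE eqxx; case: eqP => [->|] //=; rewrite addr0.
have dC' : \det C' = c * \det (schur C).
  rewrite (expand_det_col _ ord0) big_ord_recl big1 ?addr0; last first.
    by move=> i _; rewrite /C' !mxE /= /c mulfK // subrr mul0r.
  rewrite /C' !mxE eqxx /cofactor expr0 mul1r; congr (_ * \det _).
  by apply/matrixP => i j; rewrite !mxE.
by rewrite {1}eC det_mulmx dE mul1r.
Qed.

Lemma qf_delta (R : realType) n (C : 'M[R]_n) k :
  qf (\col_i (i == k)%:R) C = C k k.
Proof.
rewrite qfE (bigD1 k) //= [X in _ + X]big1 ?addr0; last first.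
  by move=> i /negPf ik; apply: big1 => j _; rewrite !mxE ik !mul0r.
rewrite (bigD1 k) //= [X in _ + X]big1 ?addr0; last first.
  by move=> j /negPf jk; rewrite !mxE jk mulr0.
by rewrite !mxE eqxx mul1r mulr1.
Qed.

Lemma delta_neq0 (R : realType) n (k : 'I_n) : (\col_i (i == k)%:R : 'cV[R]_n) != 0.
Proof.
apply/eqP => /matrixP /(_ k 0); rewrite !mxE eqxx => /eqP.
by rewrite oner_eq0.
Qed.

Lemma pd_diag_gt0 (R : realType) n (C : 'M[R]_n) k : pd C -> 0 < C k k.
Proof. by case=> _ /(_ _ (delta_neq0 R k)); rewrite -/(qf _ _) qf_delta. Qed.

Lemma ext_neq0 (R : realType) n s (y : 'cV[R]_n) : y != 0 -> ext s y != 0.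
Proof.
apply: contraNN => /eqP ey; apply/eqP/matrixP => j k.
by rewrite (ord1 k) -(extS s) ey !mxE.
Qed.

Lemma qf_ext_opt (R : realType) n (C : 'M[R]_n.+1) y : C^T = C -> C ord0 ord0 != 0 ->
  qf (ext (- (rr C y / C ord0 ord0)) y) C = qf y (schur C).
Proof. by move=> sC c0; rewrite qf_ext // addNr expr0n /= mulr0 add0r. Qed.

Lemma qf_ext_ge (R : realType) n (C : 'M[R]_n.+1) s y : pd C ->
  qf y (schur C) <= qf (ext s y) C.
Proof.
move=> pC; have c0 := pd_diag_gt0 ord0 pC.
rewrite qf_ext ?(gt_eqF c0) //; last by case: pC.
by rewrite lerDr; apply: mulr_ge0; [exact: ltW | exact: sqr_ge0].
Qed.

Lemma pd_schur (R : realType) n (C : 'M[R]_n.+1) : pd C -> pd (schur C).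
Proof.
move=> pC; have c0 := pd_diag_gt0 ord0 pC; case: (pC) => sC qC.
have sym i j : C i j = C j i by rewrite -{1}sC mxE.
split.
  apply/matrixP => i j; rewrite !mxE (sym (lift ord0 j)) (sym ord0 (lift ord0 i)).
  by rewrite (sym (lift ord0 j) ord0) [_ * C ord0 _]mulrC.
move=> y y0; rewrite -/(qf _ _) -qf_ext_opt //; last by rewrite gt_eqF.
exact/qC/ext_neq0.
Qed.
Lemma ln_concave (R : realType) (a b t : R) : 0 < a -> 0 < b -> 0 <= t <= 1 ->
  (1-t) * ln a + t * ln b <= ln ((1-t)*a + t*b).
Proof.
move=> a0 b0 /andP[t0 t1].
have := @concave_ln _ (Itv01 t0 t1) _ _ b0 a0.
by rewrite !convRE /= /unstable.onem [_ * ln b + _]addrC [t * b + _]addrC.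
Qed.

Lemma logdet_main (R : realType) n : forall (A B C : 'M[R]_n) (t : R),
  0 <= t <= 1 -> pd A -> pd B -> pd C ->
  (forall x, (1 - t) * qf x A + t * qf x B <= qf x C) ->
  [/\ 0 < \det A, 0 < \det B, 0 < \det C &
      (1 - t) * ln (\det A) + t * ln (\det B) <= ln (\det C)].
Proof.
elim: n => [|n IH] A B C t t01 pA pB pC hq.
  by rewrite !det_mx00 ln1 !mulr0 addr0 ltr01.
have a0 := pd_diag_gt0 ord0 pA; have b0 := pd_diag_gt0 ord0 pB.
have c0 := pd_diag_gt0 ord0 pC.
have [t0 t1] : 0 <= t /\ t <= 1 by case/andP: t01.
have hs : forall y, (1 - t) * qf y (schur A) + t * qf y (schur B) <= qf y (schur C).
  move=> y; rewrite -(qf_ext_opt y pC.1 (lt0r_neq0 c0)).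
  set x := ext _ y; apply: le_trans (hq x).
  apply: lerD; apply: ler_wpM2l => //; rewrite ?subr_ge0 //; exact: qf_ext_ge.
have [dA dB dC hl] := IH _ _ _ _ t01 (pd_schur pA) (pd_schur pB) (pd_schur pC) hs.
rewrite !det_schur ?gt_eqF //.
have hc : (1 - t) * A ord0 ord0 + t * B ord0 ord0 <= C ord0 ord0.
  by have := hq (\col_i (i == ord0)%:R); rewrite !qf_delta.
have m0 : 0 < (1 - t) * A ord0 ord0 + t * B ord0 ord0 by nra.
have := ln_concave a0 b0 t01.
rewrite -(ler_ln (x := _ + _)) ?posrE // in hc.
rewrite !lnM ?posrE //.
split; try exact: mulr_gt0.
lra.
Qed.
Definition fE (dT : measure_display) (T : measurableType dT) (R : realType) (P : probability T R) (f : T -> R) : R := fine ('E_P[f])%E.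

Lemma Ladd (dT : measure_display) (T : measurableType dT) (R : realType) (P : probability T R) (f g : T -> R) :
  f \in Lfun P 1 -> g \in Lfun P 1 -> (fun w => f w + g w) \in Lfun P 1.
Proof. move=> hf hg. exact: (rpredD hf hg). Qed.

Lemma Lscale (dT : measure_display) (T : measurableType dT) (R : realType) (P : probability T R) (f : T -> R) c :
  f \in Lfun P 1 -> (fun w => c * f w) \in Lfun P 1.
Proof. move=> hf. exact: (rpredZ c hf). Qed.

Lemma fE_add (dT : measure_display) (T : measurableType dT) (R : realType) (P : probability T R) (f g : T -> R) :
  f \in Lfun P 1 -> g \in Lfun P 1 -> fE P (fun w => f w + g w) = fE P f + fE P g.
Proof.
move=> hf hg; rewrite /fE (expectationD hf hg) fineD //; exact: expectation_fin_num.
Qed.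

Lemma fE_scale (dT : measure_display) (T : measurableType dT) (R : realType) (P : probability T R) (f : T -> R) c :
  f \in Lfun P 1 -> fE P (fun w => c * f w) = c * fE P f.
Proof.
move=> hf; rewrite /fE.
have -> : (fun w => c * f w) = c \o* f by apply/funext => w /=; rewrite mulrC.
by rewrite expectationZl // -(fineK (expectation_fin_num hf)) -EFinM.
Qed.

Lemma fE_le (dT : measure_display) (T : measurableType dT) (R : realType) (P : probability T R) (f g : T -> R) :
  f \in Lfun P 1 -> g \in Lfun P 1 -> (forall w, f w <= g w) -> fE P f <= fE P g.
Proof.
move=> hf hg fg; rewrite /fE.
have h0 : forall w, 0 <= (g \- f) w by move=> w /=; rewrite subr_ge0.
have := @expectation_ge0 _ _ _ P (g \- f) h0.
rewrite expectationB // -(fineK (expectation_fin_num hf)) -(fineK (expectation_fin_num hg)).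
by rewrite -EFinB lee_fin subr_ge0.
Qed.

Lemma fE_sum (dT : measure_display) (T : measurableType dT) (R : realType) (P : probability T R) n :
  forall (F : 'I_n -> T -> R), (forall i, F i \in Lfun P 1) ->
  (fun w => \sum_i F i w) \in Lfun P 1 /\ fE P (fun w => \sum_i F i w) = \sum_i fE P (F i).
Proof.
elim: n => [|n IH] F hF.
  under eq_fun do rewrite big_ord0.
  rewrite big_ord0 /fE expectation_cst /=; split => //.
  exact: (rpred0 (Lfun P 1)).
under eq_fun do rewrite big_ord_recl.
have [h1 h2] := IH (fun i => F (lift ord0 i)) (fun i => hF _).
split; first exact: Ladd.
by rewrite fE_add // h2 big_ord_recl.
Qed.

Lemma qf_lin (R : realType) n (x : 'cV[R]_n) (A B : 'M[R]_n) a b :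
  qf x (a *: A + b *: B) = a * qf x A + b * qf x B.
Proof.
rewrite !qfE !mulr_sumr -big_split; apply: eq_bigr => i _ /=.
rewrite !mulr_sumr -big_split; apply: eq_bigr => j _ /=.
by rewrite !mxE; ring.
Qed.

Lemma qfB (R : realType) n (x : 'cV[R]_n) (A B : 'M[R]_n) :
  qf x (A - B) = qf x A - qf x B.
Proof.
rewrite !qfE -sumrB; apply: eq_bigr => i _ /=.
rewrite -sumrB; apply: eq_bigr => j _ /=.
by rewrite !mxE; ring.
Qed.

Lemma qf_convex_id (R : realType) n (u v : 'cV[R]_n) (L : 'M[R]_n) t :
  (1 - t) * qf u L + t * qf v L =
  qf ((1 - t) *: u + t *: v) L + t * (1 - t) * qf (u - v) L.
Proof.
rewrite !qfE !mulr_sumr -!big_split; apply: eq_bigr => i _ /=.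
rewrite !mulr_sumr -!big_split; apply: eq_bigr => j _ /=.
by rewrite !mxE; ring.
Qed.

Lemma pd_conv (R : realType) n (D1 D2 : 'M[R]_n) t : 0 <= t <= 1 ->
  pd D1 -> pd D2 -> pd ((1 - t) *: D1 + t *: D2).
Proof.
move=> /andP[t0 t1] [s1 q1] [s2 q2]; split.
  by rewrite linearD !linearZ /= s1 s2.
move=> x x0; have := q1 x x0; have := q2 x x0.
rewrite -![(x^T *m _ *m x) 0 0]/(qf x _) qf_lin => h2 h1.
nra.
Qed.

Lemma mexpect_sym (dT : measure_display) (T : measurableType dT) (R : realType)
  (P : probability T R) n (G : T -> 'M[R]_n) :
  (forall w, (G w)^T = G w) -> (mexpect P G)^T = mexpect P G.
Proof.
move=> sG; apply/matrixP => i j; rewrite !mxE.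
congr (fine _); congr ('E_P[_])%E; apply/funext => w.
by rewrite -{1}(sG w) mxE.
Qed.

Lemma qf_mexpect (dT : measure_display) (T : measurableType dT) (R : realType)
  (P : probability T R) n (G : T -> 'M[R]_n) (x : 'cV[R]_n) :
  (forall i j, (fun w => G w i j) \in Lfun P 1) ->
  (fun w => qf x (G w)) \in Lfun P 1 /\
  qf x (mexpect P G) = fE P (fun w => qf x (G w)).
Proof.
move=> hG.
have e : (fun w => qf x (G w)) =
    (fun w => \sum_i (fun i w => \sum_j (fun j w => (x i 0 * x j 0) * G w i j) j w) i w).
  by apply/funext => w; rewrite qfE; apply: eq_bigr => i _; apply: eq_bigr => j _; ring.
have hin i : (fun w => \sum_j (fun j w => (x i 0 * x j 0) * G w i j) j w) \in Lfun P 1 /\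
    fE P (fun w => \sum_j (fun j w => (x i 0 * x j 0) * G w i j) j w) =
    \sum_j fE P (fun w => (x i 0 * x j 0) * G w i j).
  by apply: fE_sum => j; apply: Lscale.
rewrite e; have [h1 h2] := fE_sum (fun i => (hin i).1).
split => //; rewrite h2 qfE; apply: eq_bigr => i _.
rewrite (hin i).2; apply: eq_bigr => j _.
by rewrite fE_scale // mxE /fE; ring.
Qed.

Lemma entry_L1 (dT : measure_display) (T : measurableType dT) (R : realType)
  (P : probability T R) n (S : T -> 'M[R]_n) (M : 'M[R]_n) :
  (forall i j, (fun w => S w i j) \in Lfun P 2%:E) ->
  forall i j, (fun w => (S w *m M *m S w) i j) \in Lfun P 1.
Proof.
move=> hS i j.
have e : (fun w => (S w *m M *m S w) i j) =
   (fun w => \sum_k (fun k w => \sum_l (fun l w => M l k * (S w i l * S w k j)) l w) k w).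
  apply/funext => w; rewrite mxE; apply: eq_bigr => k _.
  rewrite mxE mulr_suml; apply: eq_bigr => l _; ring.
rewrite e; apply: (fE_sum _).1 => k; apply: (fE_sum _).1 => l.
apply: Lscale; exact: Lfun2_mul_Lfun1.
Qed.

Lemma qf_SDLDS (R : realType) n (S D L : 'M[R]_n) x : S^T = S -> D^T = D ->
  qf x (S *m D *m L *m D *m S) = qf (D *m S *m x) L.
Proof. by move=> sS sD; rewrite /qf !trmx_mul sS sD !mulmxA. Qed.

Lemma qf_pt_convex (R : realType) n (S D1 D2 L : 'M[R]_n) x t : 0 <= t <= 1 ->
  psd L -> S^T = S -> D1^T = D1 -> D2^T = D2 ->
  qf x (S *m ((1 - t) *: D1 + t *: D2) *m L *m ((1 - t) *: D1 + t *: D2) *m S) <=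
  (1 - t) * qf x (S *m D1 *m L *m D1 *m S) + t * qf x (S *m D2 *m L *m D2 *m S).
Proof.
move=> /andP[t0 t1] [_ qL] sS s1 s2; set Dt := (1 - t) *: D1 + t *: D2.
have sDt : Dt^T = Dt by rewrite /Dt linearD !linearZ /= s1 s2.
rewrite !qf_SDLDS // qf_convex_id.
rewrite /Dt !mulmxDl !scalemxAl.
have := qL (D1 *m S *m x - D2 *m S *m x); rewrite -/(qf _ _) => h.
have : 0 <= t * (1 - t) * qf (D1 *m S *m x - D2 *m S *m x) L.
  by apply: mulr_ge0 => //; apply: mulr_ge0; rewrite ?subr_ge0.
lra.
Qed.

Unset Implicit Arguments.
Unset Strict Implicit.

Theorem proposition1 (R : realType) (dT : measure_display) (T : measurableType dT)
  (P : probability T R) (d : nat) (L : 'M[R]_d) (S : T -> 'M[R]_d) :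
  psd L ->
  (forall w, psd (S w)) ->
  (forall i j, (fun w => S w i j) \in Lfun P 2%E) ->
  mexpect P S = 1%:M ->
  (* the feasible set is convex *)
  (forall (D1 D2 : 'M[R]_d) (t : R), 0 <= t <= 1 ->
     feasible P S L D1 -> feasible P S L D2 ->
     feasible P S L ((1 - t) *: D1 + t *: D2)) /\
  (* the objective log det(D^{-1}) is convex on S^d_++ *)
  (forall (D1 D2 : 'M[R]_d) (t : R), 0 <= t <= 1 ->
     pd D1 -> pd D2 ->
     objective ((1 - t) *: D1 + t *: D2)
       <= (1 - t) * objective D1 + t * objective D2).
Proof.
move=> psdL psdS hS _.
have sL : L^T = L by case: psdL.
have sS w : (S w)^T = S w by case: (psdS w).
have hF (D : 'M[R]_d) : forall i j,
    (fun w => (S w *m D *m L *m D *m S w) i j) \in Lfun P 1.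
  move=> i j; have := entry_L1 (D *m L *m D) hS i j.
  have -> : (fun w => (S w *m (D *m L *m D) *m S w) i j) =
            (fun w => (S w *m D *m L *m D *m S w) i j).
    by apply/funext => w; rewrite !mulmxA.
  by [].
have sF (D : 'M[R]_d) : D^T = D -> forall w,
    (S w *m D *m L *m D *m S w)^T = S w *m D *m L *m D *m S w.
  by move=> sD w; rewrite !trmx_mul sS sD sL !mulmxA.
split.
  move=> D1 D2 t t01 [pD1 [sM1 qM1]] [pD2 [sM2 qM2]].
  have pDt := pd_conv t01 pD1 pD2.
  split => //; split.
    by rewrite linearB /= pDt.1 mexpect_sym //; apply: sF; case: pDt.
  move=> x; rewrite -/(qf _ _) qfB qf_lin.
  have := qM1 x; have := qM2 x; rewrite -!/(qf _ _) !qfB.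
  have [i1 ->] := qf_mexpect x (hF D1).
  have [i2 ->] := qf_mexpect x (hF D2).
  have [it ->] := qf_mexpect x (hF ((1 - t) *: D1 + t *: D2)).
  move=> h2 h1.
  have hle : fE P (fun w => qf x (S w *m ((1 - t) *: D1 + t *: D2) *m L *m
                                   ((1 - t) *: D1 + t *: D2) *m S w)) <=
             fE P (fun w => (1 - t) * qf x (S w *m D1 *m L *m D1 *m S w) +
                            t * qf x (S w *m D2 *m L *m D2 *m S w)).
    apply: fE_le => //; first by apply: Ladd; apply: Lscale.
    move=> w; apply: qf_pt_convex => //; [exact: pD1.1 | exact: pD2.1].
  rewrite fE_add ?fE_scale // in hle; try by apply: Lscale.
  case/andP: t01 => t0 t1.
  have : 0 <= (1 - t) * (qf x D1 - fE P (fun w => qf x (S w *m D1 *m L *m D1 *m S w))).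
    by apply: mulr_ge0 => //; rewrite subr_ge0.
  have : 0 <= t * (qf x D2 - fE P (fun w => qf x (S w *m D2 *m L *m D2 *m S w))).
    by apply: mulr_ge0.
  lra.
move=> D1 D2 t t01 p1 p2.
have pt := pd_conv t01 p1 p2.
have hq : forall x, (1 - t) * qf x D1 + t * qf x D2 <= qf x ((1 - t) *: D1 + t *: D2).
  by move=> x; rewrite qf_lin.
have [d1 d2 dt h] := logdet_main t01 p1 p2 pt hq.
rewrite /objective !det_inv !lnV ?posrE //.
lra.
Qed.
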